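(* Let $(\mathcal A,d)$ be a DGA, let $a,b_1,\dots,b_n\in\mathcal A$ be closed with $|a|$ even and $a\wedge b_i$ exact, and let $\xi_i$ satisfy $d\xi_i=a\wedge b_i$. Fix $j\in\{1,\dots,n\}$, let $\eta_j$ be a closed element of the same degree as $\xi_j$, and set $\xi_j'=\xi_j+\eta_j$. Let $c=\sum_{i=1}^n \overline{\xi_1}\wedge\cdots\wedge\overline{\xi_{i-1}}\wedge b_i\wedge\xi_{i+1}\wedge\cdots\wedge\xi_n$ and let $c'$ be given by the same formula with $\xi_j$ replaced by $\xi_j'$. Then $$c'=c+(-1)^{(|b_j|+1)(n-j+\sum_{i>j}|b_i|)}\Big(\sum_{i=1,\,i\neq j}^n\overline{\xi_1}\wedge\cdots\wedge\widehat{\overline{\xi_j}}\wedge\cdots\wedge\overline{\xi_{i-1}}\wedge b_i\wedge\xi_{i+1}\wedge\cdots\wedge\xi_n\Big)\wedge\eta_j,$$ where $\widehat{\overline{\xi_j}}$ means that the factor $\xi_j$ is omitted.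
   Context: A DGA is a graded-commutative differential graded algebra over $\mathbb R$; $|x|$ denotes degree and $\overline{x}=(-1)^{|x|}x$. *)

(* Defs.v *)
From mathcomp Require Import all_boot all_order all_algebra.
From mathcomp Require Import reals.
Set Implicit Arguments. Unset Strict Implicit. Unset Printing Implicit Defensive.
Import Order.TTheory GRing.Theory Num.Theory.
Local Open Scope ring_scope.

Record is_DGA (R : realType) (A : algType R) (G : nat -> A -> Prop) (d : A -> A)
  : Prop := {
  G_zero : forall k, G k 0;
  G_add : forall k x y, G k x -> G k y -> G k (x + y);
  G_scale : forall k (r : R) x, G k x -> G k (r *: x);
  G_span : forall x : A, exists (m : nat) (y : nat -> A),
      (forall k, G k (y k)) /\ x = \sum_(k < m) y k;
  G_direct : forall (m : nat) (y : nat -> A),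
      (forall k, G k (y k)) -> \sum_(k < m) y k = 0 -> forall k, (k < m)%N -> y k = 0;
  G_one : G 0 1;
  G_mul : forall p q x y, G p x -> G q y -> G (p + q)%N (x * y);
  G_comm : forall p q x y, G p x -> G q y -> x * y = ((-1) ^+ (p * q) : R) *: (y * x);
  d_add : forall x y, d (x + y) = d x + d y;
  d_scale : forall (r : R) x, d (r *: x) = r *: d x;
  d_deg : forall p x, G p x -> G p.+1 (d x);
  d_sq : forall x, d (d x) = 0;
  d_Leibniz : forall p x y, G p x ->
      d (x * y) = d x * y + ((-1) ^+ p : R) *: (x * d y)
}.

Definition dga_closed (A : Type) (z : A) (d : A -> A) (x : A) : Prop := d x = z.
Definition dga_exact (A : Type) (d : A -> A) (x : A) : Prop := exists y, d y = x.

Definition dga_bar (R : realType) (A : algType R) (p : nat) (x : A) : A :=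
  ((-1) ^+ p : R) *: x.

Definition c_factor (R : realType) (A : algType R) (px : nat -> nat)
  (b xi : nat -> A) (i k : nat) : A :=
  if (k < i)%N then dga_bar (px k) (xi k) else if k == i then b i else xi k.

Definition dga_c (R : realType) (A : algType R) (n : nat) (px : nat -> nat)
  (b xi : nat -> A) : A :=
  \sum_(1 <= i < n.+1) \prod_(1 <= k < n.+1) c_factor px b xi i k.

(* Main.v *)
Require Import Defs.
From mathcomp Require Import all_boot all_order all_algebra.
From mathcomp Require Import reals.
Import Order.TTheory GRing.Theory Num.Theory.
Local Open Scope ring_scope.

Lemma odd_sum_shift (F G : nat -> nat) (i m p : nat) :
  (forall k, (m <= k < p)%N -> odd (F k) = odd (G k) (+) (k == i)) ->
  odd (\sum_(m <= k < p) F k)%N = odd (\sum_(m <= k < p) G k)%N (+) (m <= i < p)%N.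
Proof.
elim: p => [|p IH] H.
  by rewrite !big_geq // ltn0 andbF.
case: (leqP m p) => hmp.
  rewrite !big_nat_recr //= !oddD IH; last first.
    by move=> k /andP[h1 h2]; apply: H; rewrite h1 ltnW.
  rewrite H ?hmp ?leqnn //.
  case: (ltngtP i p) => h.
  - rewrite ltnS (ltnW h) andbT.
    by case: (m <= i)%N; case: (odd (G p)); case: (odd (\sum_(m <= k < p) G k)).
  - rewrite ltnS (leqNgt i) h !andbF.
    by case: (odd (G p)); case: (odd (\sum_(m <= k < p) G k)).
  - subst i; rewrite hmp ltnSn !andbF.
    by case: (odd (G p)); case: (odd (\sum_(m <= k < p) G k)).
rewrite !big_geq //.
case: (leqP m i) => hi //=.
by rewrite ltnS leqNgt (leq_trans hmp hi).
Qed.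

Lemma G_prod (R : realType) (A : algType R) (G : nat -> A -> Prop) (d : A -> A)
  (deg : nat -> nat) (F : nat -> A) m p :
  is_DGA G d ->
  (forall k, (m <= k < p)%N -> G (deg k) (F k)) ->
  G (\sum_(m <= k < p) deg k)%N (\prod_(m <= k < p) F k).
Proof.
move=> HD H.
rewrite big_nat_cond [X in G _ X]big_nat_cond.
apply: (big_ind2 (fun s x => G s x)).
- exact: (G_one HD).
- by move=> x1 x2 y1 y2; apply: (G_mul HD).
- by move=> k /andP[hk _]; apply: H.
Qed.

Lemma sign_odd_eq (R : realType) (m p : nat) :
  odd m = odd p -> ((-1) ^+ m : R) = (-1) ^+ p.
Proof. by move=> h; rewrite -signr_odd h signr_odd. Qed.

Theorem lemma2p6 (R : realType) (A : algType R) (G : nat -> A -> Prop) (d : A -> A)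
  (n : nat) (a : A) (pa : nat) (b xi : nat -> A) (pb px : nat -> nat)
  (j : nat) (eta : A) :
  is_DGA G d ->
  G pa a -> dga_closed 0 d a -> ~~ odd pa ->
  (forall i, (1 <= i <= n)%N -> G (pb i) (b i) /\ dga_closed 0 d (b i)) ->
  (forall i, (1 <= i <= n)%N -> dga_exact d (a * b i)) ->
  (forall i, (1 <= i <= n)%N ->
     (px i).+1 = (pa + pb i)%N /\ G (px i) (xi i) /\ d (xi i) = a * b i) ->
  (1 <= j <= n)%N ->
  G (px j) eta -> dga_closed 0 d eta ->
  let xi' := fun k => if k == j then xi j + eta else xi k in
  dga_c n px b xi' =
    dga_c n px b xi +
    ((-1) ^+ ((pb j).+1 * ((n - j) + \sum_(j.+1 <= i < n.+1) pb i)) : R) *: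
      ((\sum_(1 <= i < n.+1 | i != j)
          \prod_(1 <= k < n.+1 | k != j) c_factor px b xi i k) * eta).
Proof.
move=> HD Ga da pa_even Hb Hex Hxi /andP[hj1 hjn] Geta deta xi'.
pose s : R := (-1) ^+ ((pb j).+1 * ((n - j) + \sum_(j.+1 <= i < n.+1) pb i)).
have oddpx : forall k, (1 <= k <= n)%N -> odd (px k) = ~~ odd (pb k).
  move=> k hk; have [e _] := Hxi k hk.
  have := congr1 odd e; rewrite oddS oddD (negbTE pa_even) /= => <-.
  by rewrite negbK.
have hjn' : (j < n.+1)%N by rewrite ltnS.
have splitp : forall F : nat -> A, \prod_(1 <= k < n.+1) F k =
    (\prod_(1 <= k < j) F k) * (F j * \prod_(j.+1 <= k < n.+1) F k).
  by move=> F; rewrite (big_cat_nat hj1 (ltnW hjn')) /= (big_ltn hjn').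
have splitc : forall F : nat -> A, \prod_(1 <= k < n.+1 | k != j) F k =
    (\prod_(1 <= k < j) F k) * \prod_(j.+1 <= k < n.+1) F k.
  move=> F; rewrite (big_cat_nat hj1 (ltnW hjn')) /= (big_ltn_cond hjn') eqxx /=.
  congr (_ * _).
    rewrite big_nat_cond [RHS]big_nat_cond; apply: eq_bigl => k.
    by case/boolP: (1 <= k < j)%N => //= /andP[_ h]; rewrite neq_ltn h.
  rewrite big_nat_cond [RHS]big_nat_cond; apply: eq_bigl => k.
  by case/boolP: (j.+1 <= k < n.+1)%N => //= /andP[h _]; rewrite neq_ltn h orbT.
have key : forall i, (1 <= i < n.+1)%N ->
  \prod_(1 <= k < n.+1) c_factor px b xi' i k =
  \prod_(1 <= k < n.+1) c_factor px b xi i k +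
  (if i != j then s *: ((\prod_(1 <= k < n.+1 | k != j) c_factor px b xi i k) * eta)
   else 0).
  move=> i /andP[hi1 hin]; rewrite ltnS in hin.
  have cf_eq : forall k, k != j -> c_factor px b xi' i k = c_factor px b xi i k.
    by move=> k hk; rewrite /c_factor /xi' (negbTE hk).
  rewrite !splitp.
  have -> : \prod_(1 <= k < j) c_factor px b xi' i k = \prod_(1 <= k < j) c_factor px b xi i k.
    by apply: eq_big_nat => k /andP[_ hk]; apply: cf_eq; rewrite neq_ltn hk.
  have -> : \prod_(j.+1 <= k < n.+1) c_factor px b xi' i k =
            \prod_(j.+1 <= k < n.+1) c_factor px b xi i k.
    by apply: eq_big_nat => k /andP[hk _]; apply: cf_eq; rewrite neq_ltn hk orbT.
  case: (eqVneq i j) => [->|hij].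
    by rewrite /c_factor /xi' ltnn !eqxx /= addr0.
  rewrite /= splitc.
  set L := \prod_(1 <= k < j) _.
  set Rp := \prod_(j.+1 <= k < n.+1) _.
  pose e := if (j < i)%N then dga_bar (px j) eta else eta.
  have -> : c_factor px b xi' i j = c_factor px b xi i j + e.
    rewrite /c_factor /xi' /e eqxx eq_sym (negbTE hij).
    by case: ifP => _ //; rewrite /dga_bar scalerDr.
  rewrite mulrDl mulrDr; congr (_ + _).
  pose degf k := if k == i then pb i else px k.
  have GR : G (\sum_(j.+1 <= k < n.+1) degf k)%N Rp.
    rewrite /Rp; apply: (G_prod _ _ _ _ _ _ _ _ HD) => k /andP[hk1 hk2].
    have hk : (1 <= k <= n)%N by rewrite -[(k <= n)%N]ltnS hk2 andbT (leq_trans _ hk1).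
    rewrite /c_factor /degf.
    case: (eqVneq k i) => [->|hki].
      have hii : (1 <= i <= n)%N by rewrite hi1 hin.
      by rewrite ltnn; case: (Hb i hii).
    have [_ [Gx _]] := Hxi k hk.
    by case: ifP => _ //; apply: (G_scale HD).
  have comm := G_comm HD Geta GR.
  set D := (\sum_(j.+1 <= k < n.+1) degf k)%N in comm GR.
  set T := (\sum_(j.+1 <= k < n.+1) px k)%N.
  have oddDi : odd D = odd T (+) (j < i)%N.
    rewrite /D /T (odd_sum_shift _ px i); first by rewrite ltnS hin andbT.
    move=> k /andP[hk1 hk2]; rewrite /degf.
    case: (eqVneq k i) => [->|_]; last by rewrite addbF.
    by rewrite addbT oddpx ?negbK // hi1 hin.
  have oddSi : odd (\sum_(j.+1 <= i < n.+1) pb i) = odd T (+) odd (n - j).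
    rewrite (odd_sum_shift _ (fun k => (px k).+1) 0); last first.
      move=> k /andP[hk1 hk2]; have hk : (1 <= k <= n)%N by rewrite -[(k <= n)%N]ltnS hk2 andbT (leq_trans _ hk1).
      rewrite (gtn_eqF (leq_trans (ltn0Sn j) hk1)) addbF oddS oddpx //.
      by rewrite negbK.
    rewrite ltn0 addbF.
    rewrite (eq_bigr (fun k => px k + 1)%N); last by move=> k _; rewrite addn1.
    by rewrite big_split /= sum_nat_const_nat subSS muln1 oddD.
  have hpxj : odd (px j) = ~~ odd (pb j) by apply: oddpx; rewrite hj1 hjn.
  rewrite /e; case: ifP => hji.
    rewrite /dga_bar -scalerAl comm scalerA -scalerAr mulrA; congr (_ *: _).
    rewrite -exprD /s; apply: sign_odd_eq.
    rewrite !(oddD, oddM, oddS) oddDi !oddSi hpxj hji /=.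
    by case: (odd (pb j)); case: (odd T); case: (odd (n - j)).
  rewrite comm -scalerAr mulrA; congr (_ *: _).
  rewrite /s; apply: sign_odd_eq.
  rewrite !(oddD, oddM, oddS) oddDi !oddSi hpxj hji /=.
  by case: (odd (pb j)); case: (odd T); case: (odd (n - j)).
rewrite /dga_c (eq_big_nat _ _ key) big_split /=; congr (_ + _).
by rewrite -big_mkcond /= mulr_suml scaler_sumr.
Qed.
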